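(* Let $k\ge 2$ be an integer and let $K:[0,1]^2\to(0,\infty)$ be continuous. Let $W$ be the linear operator on $C[0,1]$, $(Wf)(t)=\int_0^1K(t,u)f(u)\,du$, let $R_k:C_0^+[0,1]\to C_0^+[0,1]$ be $(R_kf)(t)=\left[\frac{(Wf)(t)}{(Wf)(0)}\right]^k$, and let $H_k$ be the Hammerstein operator $(H_kf)(t)=\int_0^1K(t,u)f^k(u)\,du$ on $C^+[0,1]$. Then the equation $R_kf=f$ has a solution $f\in C_0^+[0,1]$ if and only if there exist $\lambda>0$ and a nonzero $f\in C^+[0,1]$ with $H_kf=\lambda f$.
   Context: $C^+[0,1]=\{f\in C[0,1]: f(x)\ge 0 \text{ for all } x\}$ and $C_0^+[0,1]=C^+[0,1]\setminus\{0\}$ (the identically zero function removed). *)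

(* Defs.v *)
From Stdlib Require Import Reals Lra ClassicalEpsilon.
Open Scope R_scope.

Definition cont01 (f : R -> R) : Prop :=
  forall x, 0 <= x <= 1 -> forall eps, 0 < eps ->
    exists delta, 0 < delta /\
      forall y, 0 <= y <= 1 -> Rabs (y - x) < delta -> Rabs (f y - f x) < eps.

Definition cont01sq (K : R -> R -> R) : Prop :=
  forall x y, 0 <= x <= 1 -> 0 <= y <= 1 -> forall eps, 0 < eps ->
    exists delta, 0 < delta /\
      forall x' y', 0 <= x' <= 1 -> 0 <= y' <= 1 ->
        Rabs (x' - x) < delta -> Rabs (y' - y) < delta ->
        Rabs (K x' y' - K x y) < eps.

Definition Cplus (f : R -> R) : Prop :=
  cont01 f /\ forall x, 0 <= x <= 1 -> 0 <= f x.

Definition C0plus (f : R -> R) : Prop :=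
  Cplus f /\ exists x, 0 <= x <= 1 /\ f x <> 0.

(* Riemann integral over [0,1] (the value of RiemannInt when g is
   integrable; an arbitrary real otherwise -- only used on integrable g). *)
Definition Int01 (g : R -> R) : R :=
  epsilon (inhabits 0)
    (fun v => exists pr : Riemann_integrable g 0 1, RiemannInt pr = v).

Definition Wop (K : R -> R -> R) (f : R -> R) (t : R) : R :=
  Int01 (fun u => K t u * f u).

Definition Rop (k : nat) (K : R -> R -> R) (f : R -> R) (t : R) : R :=
  (Wop K f t / Wop K f 0) ^ k.

Definition Hop (k : nat) (K : R -> R -> R) (f : R -> R) (t : R) : R :=
  Int01 (fun u => K t u * f u ^ k).

(* Main.v *)
Require Import Defs.
From Stdlib Require Import Reals Lra Psatz ClassicalEpsilon.
From Coquelicot Require Import Coquelicot.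
Open Scope R_scope.

Definition clamp (x : R) : R := Rmax 0 (Rmin 1 x).

Lemma clamp_in x : 0 <= clamp x <= 1.
Proof. unfold clamp, Rmax, Rmin; repeat destruct Rle_dec; lra. Qed.

Lemma clamp_id x : 0 <= x <= 1 -> clamp x = x.
Proof. intros; unfold clamp, Rmax, Rmin; repeat destruct Rle_dec; lra. Qed.

Lemma clamp_lip x y : Rabs (clamp y - clamp x) <= Rabs (y - x).
Proof.
  unfold clamp, Rmax, Rmin; repeat destruct Rle_dec;
  unfold Rabs; repeat destruct Rcase_abs; lra.
Qed.

Lemma cont01_pt f : cont01 f -> forall x, continuity_pt (fun y => f (clamp y)) x.
Proof.
  intros Hf x eps Heps.
  destruct (Hf (clamp x) (clamp_in x) eps Heps) as [d [Hd H]].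
  exists d; split; auto.
  intros y [_ Hy]. simpl in *. unfold R_dist in *.
  apply H. apply clamp_in. eapply Rle_lt_trans. apply clamp_lip. exact Hy.
Qed.

Lemma pt_cont01 f : (forall x, 0 <= x <= 1 -> continuity_pt (fun y => f (clamp y)) x) -> cont01 f.
Proof.
  intros Hf x Hx eps Heps.
  destruct (Hf x Hx eps Heps) as [d [Hd H]].
  exists d; split; auto.
  intros y Hy Hyx.
  destruct (Req_dec x y) as [<-|Hne].
  - rewrite Rminus_diag, Rabs_R0; lra.
  - specialize (H y). simpl in H. unfold R_dist in H.
    rewrite !clamp_id in H by lra. apply H. unfold D_x, no_cond; tauto.
Qed.

Lemma cont01_continuous f : cont01 f -> forall x, continuous (fun y => f (clamp y)) x.
Proof. intros Hf x. apply continuity_pt_filterlim. apply cont01_pt; auto. Qed.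

Lemma cont01_mult f g : cont01 f -> cont01 g -> cont01 (fun x => f x * g x).
Proof.
  intros Hf Hg. apply pt_cont01. intros x _.
  apply (continuity_pt_mult (fun y => f (clamp y)) (fun y => g (clamp y)));
  apply cont01_pt; auto.
Qed.

Lemma cont01_const c : cont01 (fun _ => c).
Proof. intros x _ eps H. exists 1; split; [lra|]. intros. rewrite Rminus_diag, Rabs_R0; lra. Qed.

Lemma cont01_pow f n : cont01 f -> cont01 (fun x => f x ^ n).
Proof.
  intros Hf; induction n; simpl.
  - apply cont01_const.
  - apply cont01_mult; auto.
Qed.

Lemma cont01_eq f g : (forall x, 0 <= x <= 1 -> f x = g x) -> cont01 f -> cont01 g.
Proof.
  intros E Hf x Hx eps He. destruct (Hf x Hx eps He) as [d [Hd H]].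
  exists d; split; auto. intros y Hy Hyx. rewrite <- !E by auto. auto.
Qed.

Lemma cont01_exRInt f : cont01 f -> ex_RInt f 0 1.
Proof.
  intros Hf.
  apply ex_RInt_ext with (fun y => f (clamp y)).
  - intros x Hx. rewrite Rmin_left, Rmax_right in Hx by lra. rewrite clamp_id; lra.
  - apply (@ex_RInt_continuous R_CompleteNormedModule). intros; apply cont01_continuous; auto.
Qed.

Lemma Int01_RInt f : ex_RInt f 0 1 -> Int01 f = RInt f 0 1.
Proof.
  intros H. unfold Int01.
  destruct (epsilon_spec (inhabits 0)
    (fun v => exists pr : Riemann_integrable f 0 1, RiemannInt pr = v)) as [pr Hpr].
  - exists (RiemannInt (ex_RInt_Reals_0 _ _ _ H)). exists (ex_RInt_Reals_0 _ _ _ H). reflexivity.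
  - rewrite <- Hpr. symmetry. apply RInt_Reals.
Qed.

Lemma RInt_pos01 h x0 : cont01 h -> (forall x, 0 <= x <= 1 -> 0 <= h x) ->
  0 <= x0 <= 1 -> 0 < h x0 -> 0 < RInt h 0 1.
Proof.
  intros Hc Hn Hx0 Hp.
  assert (E : RInt h 0 1 = RInt (fun y => h (clamp y)) 0 1).
  { apply RInt_ext. intros x Hx. rewrite Rmin_left, Rmax_right in Hx by lra.
    rewrite clamp_id; lra. }
  rewrite E. set (g := fun y => h (clamp y)).
  assert (Gc : forall x, continuous g x) by (intros; apply cont01_continuous; auto).
  assert (Gi : forall a b, ex_RInt g a b) by (intros; apply (@ex_RInt_continuous R_CompleteNormedModule); auto).
  destruct (Hc x0 Hx0 (h x0 / 2)) as [d [Hd H]]; [lra|].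
  set (a := Rmax 0 (x0 - d/2)). set (b := Rmin 1 (x0 + d/2)).
  assert (Ha : 0 <= a <= x0) by (unfold a, Rmax; destruct Rle_dec; lra).
  assert (Hb : x0 <= b <= 1) by (unfold b, Rmin; destruct Rle_dec; lra).
  assert (Hab : a < b) by (unfold a, b, Rmax, Rmin; repeat destruct Rle_dec; lra).
  assert (Ha' : x0 - d/2 <= a) by (unfold a; apply Rmax_r).
  assert (Hb' : b <= x0 + d/2) by (unfold b; apply Rmin_r).
  rewrite <- (RInt_Chasles g 0 a 1) by auto.
  rewrite <- (RInt_Chasles g a b 1) by auto.
  change plus with Rplus.
  assert (0 <= RInt g 0 a).
  { apply RInt_ge_0; auto; try lra. intros; unfold g; apply Hn, clamp_in. }
  assert (0 <= RInt g b 1).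
  { apply RInt_ge_0; auto; try lra. intros; unfold g; apply Hn, clamp_in. }
  assert (0 < RInt g a b).
  { apply RInt_gt_0; auto. intros x Hx. unfold g. rewrite clamp_id by lra.
    assert (Rabs (h x - h x0) < h x0 / 2) by (apply H; [lra| unfold Rabs; destruct Rcase_abs; lra]).
    unfold Rabs in *; destruct Rcase_abs; lra. }
  lra.
Qed.
Lemma cont01_K K t : cont01sq K -> 0 <= t <= 1 -> cont01 (fun u => K t u).
Proof.
  intros HK Ht x Hx eps He. destruct (HK t x Ht Hx eps He) as [d [Hd H]].
  exists d; split; auto. intros y Hy Hyx. apply H; auto.
  rewrite Rminus_diag, Rabs_R0; lra.
Qed.

Lemma Kt_cont K : cont01sq K -> forall x y,
  continuity_2d_pt (fun u v => K (clamp u) (clamp v)) x y.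
Proof.
  intros HK x y eps.
  destruct (HK (clamp x) (clamp y) (clamp_in x) (clamp_in y) eps (cond_pos eps)) as [d [Hd H]].
  exists (mkposreal d Hd). intros u v Hu Hv. simpl in *.
  apply H; try apply clamp_in; eapply Rle_lt_trans; try apply clamp_lip; auto.
Qed.

Lemma W_cont K f : cont01sq K -> cont01 f ->
  cont01 (fun t => RInt (fun u => K t u * f u) 0 1).
Proof.
  intros HK Hf.
  destruct (continuity_ab_maj (fun x => Rabs (f (clamp x))) 0 1) as [Mx [HM _]]; [lra| |].
  { intros c _. apply (continuity_pt_comp (fun x => f (clamp x)) Rabs).
    apply cont01_pt; auto. apply Rcontinuity_abs. }
  set (M := Rabs (f (clamp Mx))) in *.
  assert (HM0 : 0 <= M) by apply Rabs_pos.
  intros t Ht eps He.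
  assert (He' : 0 < eps / (M + 1)) by (apply Rdiv_lt_0_compat; lra).
  destruct (uniform_continuity_2d (fun u v => K (clamp u) (clamp v)) 0 1 0 1
     (fun x y _ _ => Kt_cont K HK x y) (mkposreal _ He')) as [d Hd].
  exists d; split; [apply cond_pos|].
  intros t' Ht' Htt.
  assert (I1 : ex_RInt (fun u => K t' u * f u) 0 1)
    by (apply cont01_exRInt, cont01_mult; auto; apply cont01_K; auto).
  assert (I2 : ex_RInt (fun u => K t u * f u) 0 1)
    by (apply cont01_exRInt, cont01_mult; auto; apply cont01_K; auto).
  pose proof (RInt_minus _ _ _ _ I1 I2) as E.
  change minus with Rminus in E. rewrite <- E.
  eapply Rle_lt_trans.
  apply (abs_RInt_le_const _ 0 1 (eps / (M + 1) * M)); [lra| |].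
  { exact (ex_RInt_minus _ _ _ _ I1 I2). }
  { intros u Hu. cbv beta.
    replace (K t' u * f u - K t u * f u) with ((K t' u - K t u) * f u) by ring.
    rewrite Rabs_mult. apply Rmult_le_compat; try apply Rabs_pos.
    - left. pose proof (Hd t u t' u Ht Hu Ht' Hu Htt) as Hx.
      rewrite !clamp_id in Hx by lra. apply Hx.
      rewrite Rminus_diag, Rabs_R0. apply cond_pos.
    - pose proof (HM u Hu) as Hx. rewrite clamp_id in Hx by lra. exact Hx. }
  apply Rlt_le_trans with (eps / (M + 1) * (M + 1)); [|right; field; lra].
  rewrite Rminus_0_r, Rmult_1_l. apply Rmult_lt_compat_l; lra.
Qed.

Lemma Wop_eq K f t : cont01sq K -> cont01 f -> 0 <= t <= 1 ->
  Wop K f t = RInt (fun u => K t u * f u) 0 1.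
Proof.
  intros HK Hf Ht. unfold Wop. apply Int01_RInt.
  apply cont01_exRInt, cont01_mult; auto. apply cont01_K; auto.
Qed.

Lemma Hop_eq k K f t : cont01sq K -> cont01 f -> 0 <= t <= 1 ->
  Hop k K f t = RInt (fun u => K t u * f u ^ k) 0 1.
Proof.
  intros HK Hf Ht. unfold Hop. apply Int01_RInt.
  apply cont01_exRInt, cont01_mult. apply cont01_K; auto. apply cont01_pow; auto.
Qed.

Theorem lemma2p1 (k : nat) (K : R -> R -> R)
  (hk : (2 <= k)%nat)
  (hKc : cont01sq K)
  (hKpos : forall t u, 0 <= t <= 1 -> 0 <= u <= 1 -> 0 < K t u) :
  (exists f : R -> R, C0plus f /\ forall t, 0 <= t <= 1 -> Rop k K f t = f t)
  <->
  (exists (lam : R) (f : R -> R), 0 < lam /\ C0plus f /\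
     forall t, 0 <= t <= 1 -> Hop k K f t = lam * f t).
Proof.
  split.
  - intros [f [[[Hfc Hfn] [x0 [Hx0 Hfx0]]] Hfix]].
    assert (Hfx0p : 0 < f x0) by (destruct (Hfn x0 Hx0); auto; congruence).
    set (h := Wop K f).
    assert (Hh : forall t, 0 <= t <= 1 -> h t = RInt (fun u => K t u * f u) 0 1)
      by (intros; apply Wop_eq; auto).
    assert (Hhc : cont01 h).
    { apply cont01_eq with (fun t => RInt (fun u => K t u * f u) 0 1).
      intros; rewrite Hh; auto. apply W_cont; auto. }
    assert (Hhn : forall t, 0 <= t <= 1 -> 0 <= h t).
    { intros t Ht. rewrite Hh by auto. apply RInt_ge_0; try lra.
      apply cont01_exRInt, cont01_mult; auto; apply cont01_K; auto.
      intros u Hu. apply Rmult_le_pos; [left; apply hKpos|apply Hfn]; lra. }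
    assert (Hc : 0 < h 0).
    { rewrite Hh by lra. apply RInt_pos01 with x0; auto.
      apply cont01_mult; auto; apply cont01_K; auto; lra.
      intros u Hu. apply Rmult_le_pos; [left; apply hKpos|apply Hfn]; lra.
      apply Rmult_lt_0_compat; auto. apply hKpos; lra. }
    exists (h 0 ^ k), h. split; [apply pow_lt; auto|]. split.
    + split; [split; auto|]. exists 0; split; [lra|]. lra.
    + intros t Ht. rewrite Hop_eq by auto.
      rewrite (RInt_ext (V:=R_CompleteNormedModule) _ (fun u => scal (h 0 ^ k) (K t u * f u))).
      * rewrite (RInt_scal (V:=R_CompleteNormedModule)). rewrite <- Hh by auto. reflexivity.
        apply cont01_exRInt, cont01_mult; auto; apply cont01_K; auto.
      * intros u Hu. rewrite Rmin_left, Rmax_right in Hu by lra.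
        rewrite <- (Hfix u) by lra. unfold Rop. fold h.
        change (K t u * h u ^ k = h 0 ^ k * (K t u * ((h u / h 0) ^ k))).
        unfold Rdiv; rewrite Rpow_mult_distr, pow_inv. field. apply pow_nonzero; lra.
  - intros [lam [f [Hlam [[[Hfc Hfn] [x0 [Hx0 Hfx0]]] Heig]]]].
    assert (Hfx0p : 0 < f x0) by (destruct (Hfn x0 Hx0); auto; congruence).
    assert (Hf0 : 0 < f 0).
    { assert (0 < lam * f 0).
      { rewrite <- Heig by lra. rewrite Hop_eq by (auto; lra).
        apply RInt_pos01 with x0; auto.
        apply cont01_mult; [apply cont01_K; auto; lra|apply cont01_pow; auto].
        intros u Hu. apply Rmult_le_pos; [left; apply hKpos; lra|apply pow_le, Hfn; auto].
        apply Rmult_lt_0_compat; [apply hKpos; lra|apply pow_lt; auto]. }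
      destruct (Rle_or_lt (f 0) 0); auto.
      assert (lam * f 0 <= 0); [|lra].
      nra. }
    set (g := fun u => (f u / f 0) ^ k).
    assert (Hgc : cont01 g).
    { unfold g. apply cont01_pow. unfold Rdiv. apply cont01_mult; auto. apply cont01_const. }
    assert (HW : forall t, 0 <= t <= 1 -> Wop K g t = / f 0 ^ k * (lam * f t)).
    { intros t Ht. rewrite Wop_eq by auto. rewrite <- Heig by auto. rewrite Hop_eq by auto.
      rewrite <- (RInt_scal (V := R_CompleteNormedModule)).
      apply RInt_ext. intros u _. unfold g.
      change (K t u * (f u / f 0) ^ k = / f 0 ^ k * (K t u * f u ^ k)).
      unfold Rdiv. rewrite Rpow_mult_distr, pow_inv. ring.
      apply cont01_exRInt, cont01_mult; [apply cont01_K; auto|apply cont01_pow; auto]. }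
    exists g. split.
    + split; [split; auto|].
      * intros x Hx. unfold g. apply pow_le. unfold Rdiv. apply Rmult_le_pos; auto.
        left; apply Rinv_0_lt_compat; auto.
      * exists x0; split; auto. unfold g. apply pow_nonzero.
        unfold Rdiv. apply Rmult_integral_contrapositive_currified; auto.
        apply Rinv_neq_0_compat; lra.
    + intros t Ht. unfold Rop. rewrite !HW by (auto; lra). unfold g. f_equal.
      assert (f 0 ^ k <> 0) by (apply pow_nonzero; lra). field. split; lra.
Qed.
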